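(* Let $U$ be a nonempty finite set, $R\subseteq U\times U$ serial and transitive, and $cl$ the closure operator of the matroid $M(Reg(U,R))$. Then for every $e\in U\setminus\bigcup\mathcal{A}(Reg(U,R))$, $cl(\{e\})=\{e\}$.
   Context: $R_s(x)=\{y\in U\mid xRy\}$; $\underline{R}(X)=\{x\mid R_s(x)\subseteq X\}$, $\overline{R}(X)=\{x\mid R_s(x)\cap X\neq\emptyset\}$; $X$ is regular if $X=\underline{R}(\overline{R}(X))$, and $Reg(U,R)$ is the lattice of regular sets under inclusion, with least element $\emptyset$. $\mathcal{A}(Reg(U,R))$ is the set of atoms (elements covering $\emptyset$) of this lattice. $h(A)$ is the length of a maximal chain in $[\emptyset,A]$. $M(Reg(U,R))$ is the matroid on $U$ with independent sets $\{X\subseteq U\mid h(Y)\ge|X\cap Y|\ \forall Y\in Reg(U,R)\}$, rank function $r(X)=\max\{|I|\mid I\subseteq X \text{ independent}\}$, and closure operator $cl(X)=\{u\in U\mid r(X\cup\{u\})=r(X)\}$. *)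

(* Defs.v *)
From mathcomp Require Import all_boot.
Set Implicit Arguments. Unset Strict Implicit. Unset Printing Implicit Defensive.

Section RoughMatroid.
Variables (T : finType) (R : rel T).

Definition Rs (x : T) : {set T} := [set y | R x y].
Definition lowerR (X : {set T}) : {set T} := [set x | Rs x \subset X].
Definition upperR (X : {set T}) : {set T} := [set x | Rs x :&: X != set0].
Definition regular (X : {set T}) : bool := X == lowerR (upperR X).

Definition atom (A : {set T}) : bool :=
  [&& regular A, A != set0 &
      [forall B : {set T}, (regular B && (B \proper A)) ==> (B == set0)]].
Definition atoms_union : {set T} := \bigcup_(A | atom A) A.

Definition reg_chain_to (A : {set T}) (k : nat) : bool :=
  [exists c : k.+1.-tuple {set T},
     [&& nth set0 c 0 == set0, nth set0 c k == A, all regular c &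
         [forall i : 'I_k, nth set0 c i \proper nth set0 c i.+1]]].

(* h(A): length of a maximal chain in [set0, A] (taken as the maximum
   length; strict chains have length at most #|T|) *)
Definition h (A : {set T}) : nat :=
  \max_(k < #|T|.+1 | reg_chain_to A k) k.

Definition indep (X : {set T}) : bool :=
  [forall Y : {set T}, regular Y ==> (#|X :&: Y| <= h Y)].

Definition rank (X : {set T}) : nat :=
  \max_(I : {set T} | (I \subset X) && indep I) #|I|.

Definition cl (X : {set T}) : {set T} :=
  [set u | rank (u |: X) == rank X].

End RoughMatroid.

(* Main.v *)
Require Import Defs.
From mathcomp Require Import all_boot.

Section Aux.
Variables (T : finType) (R : rel T).
Hypothesis hserial : forall x : T, exists y : T, R x y.

Lemma set0_reg : regular R set0.
Proof.
apply/eqP/setP => x; rewrite !inE.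
have -> : upperR R set0 = set0.
  by apply/setP => z; rewrite !inE setI0 eqxx.
rewrite subset0; symmetry; apply/negP => /eqP H.
have [y Hy] := hserial x.
have : y \in Rs R x by rewrite inE.
by rewrite H inE.
Qed.

Lemma h_ge k (Y : {set T}) : k < #|T|.+1 -> reg_chain_to R Y k -> k <= h R Y.
Proof.
move=> Hk Hc; rewrite /h.
exact: (@leq_bigmax_cond _ (fun i : 'I_#|T|.+1 => reg_chain_to R Y i)
          (fun i => nat_of_ord i) (Ordinal Hk)).
Qed.

Lemma rank_le (X : {set T}) : rank R X <= #|X|.
Proof.
apply/bigmax_leqP => I /andP [HI _]; exact: subset_leq_card.
Qed.
End Aux.

Theorem proposition5 (T : finType) (R : rel T)
  (hne : 0 < #|T|)
  (hserial : forall x : T, exists y : T, R x y)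
  (htrans : transitive R)
  (e : T) (he : e \notin atoms_union R) :
  cl R [set e] = [set e].
Proof.
apply/setP => u; rewrite !inE.
case: (eqVneq u e) => [->|hue].
  by rewrite setUid eqxx.
apply/negP => /eqP Hr.
have H1 := @rank_le _ R [set e]; rewrite cards1 -Hr in H1.
have Hcard : #|[set u; e]| = 2 by rewrite cards2 hue.
have Hind : indep R [set u; e].
  apply/forallP => Y; apply/implyP => HY.
  have Hs : #|[set u; e] :&: Y| <= 2.
    by rewrite -Hcard; apply: subset_leq_card; apply: subsetIl.
  have HT2 : 2 <= #|T|.
    by rewrite -Hcard; apply: max_card.
  case: (posnP #|[set u; e] :&: Y|) => [->//|Hpos].
  have [x Hx] : exists x, x \in [set u; e] :&: Y.
    by apply/card_gt0P.
  have YneA : Y != set0.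
    apply/negP => /eqP HY0; move: Hx; by rewrite HY0 setI0 inE.
  have h1 : 1 <= h R Y.
    apply: h_ge => //.
    apply/existsP; exists [tuple set0; Y] => /=.
    rewrite !eqxx /= HY (@set0_reg _ R hserial) /=.
    apply/forallP => i; case: i => [[|//] ?] /=.
    by rewrite proper0.
  case: (leqP #|[set u; e] :&: Y| 1) => [Hle1|Hgt1]; first exact: leq_trans h1.
  have Hfull : [set u; e] :&: Y = [set u; e].
    apply/eqP; rewrite eqEcard subsetIl Hcard; done.
  have eY : e \in Y.
    have : e \in [set u; e] :&: Y by rewrite Hfull !inE eqxx orbT.
    by rewrite inE => /andP [].
  have natom : ~~ atom R Y.
    apply/negP => HA; move/negP: he; apply.
    by apply/bigcupP; exists Y.
  move: natom; rewrite /atom HY YneA /= negb_forall => /existsP [B].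
  rewrite negb_imply => /andP [/andP [HB HBY] HB0].
  apply: (leq_trans Hs); apply: h_ge; first by [].
  apply/existsP; exists [tuple set0; B; Y] => /=.
  rewrite !eqxx /= HY HB (@set0_reg _ R hserial) /=.
  apply/forallP => i; case: i => [[|[|//]] ?] /=.
    by rewrite proper0.
  done.
have H2 : 2 <= rank R [set u; e].
  rewrite -Hcard /rank.
  exact: (@leq_bigmax_cond _ (fun I : {set T} => (I \subset [set u; e]) && indep R I)
          (fun I => #|I|) [set u; e] (introT andP (conj (subxx _) Hind))).

have := leq_trans H2 H1; by [].
Qed.
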